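(* Let $\nu$ be a modulus of variation, $1\le p<\infty$, and $\varepsilon_p(k)=(\nu(k)^p-\nu(k-1)^p)^{1/p}$ for $k\ge1$. Then: (i) $\{\nu(k)/k^{1/p}\}$ is nonincreasing if and only if $\{\nu(k)^p\}$ is quasiconcave, if and only if $\varepsilon_p(k)\le\nu(k)/k^{1/p}$ for all $k$; (ii) $\{\varepsilon_p(k)\}$ is nonincreasing if and only if $\{\nu(k)^p\}$ is concave; in this case, if $\nu(k)/k^{1/p}\to0$ then $\{\nu(k)/k^{1/p}\}$ is strictly decreasing from some index on; (iii) there is a constant $C$ such that $\nu(k)-\nu(k-1)\le C\,\varepsilon_p(k)\,k^{1/p-1}$ for all $k\ge1$.
   Context: A modulus of variation is a nondecreasing concave sequence of positive numbers $\nu(1),\nu(2),\dots$ (concave meaning $a_{k+1}+a_{k-1}\le2a_k$ for all $k$), with the convention $\nu(0)=0$. A sequence $\{a_k\}$ of positive numbers is quasiconcave if $\{a_k\}$ is nondecreasing and $\{a_k/k\}$ is nonincreasing. *)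

(* Defs.v *)
From HB Require Import structures.
From mathcomp Require Import all_boot all_order all_algebra.
From mathcomp Require Import all_classical all_reals all_analysis.
Set Implicit Arguments. Unset Strict Implicit. Unset Printing Implicit Defensive.
Import Order.TTheory GRing.Theory Num.Theory.
Local Open Scope ring_scope.

Section Defs.
Variable R : realType.

Definition concave_seq (a : nat -> R) : Prop :=
  forall k : nat, (0 < k)%N -> a k.+1 + a k.-1 <= 2 * a k.

Definition nonincr_seq (a : nat -> R) : Prop :=
  forall k : nat, (0 < k)%N -> a k.+1 <= a k.

Definition modulus_of_variation (nu : nat -> R) : Prop :=
  [/\ nu 0%N = 0,
      (forall k : nat, (0 < k)%N -> 0 < nu k),
      (forall k : nat, (0 < k)%N -> nu k <= nu k.+1) &
      concave_seq nu].

Definition quasiconcave (a : nat -> R) : Prop :=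
  [/\ (forall k : nat, (0 < k)%N -> 0 < a k),
      (forall k : nat, (0 < k)%N -> a k <= a k.+1) &
      (forall k : nat, (0 < k)%N -> a k.+1 / k.+1%:R <= a k / k%:R)].

Definition eps_p (p : R) (nu : nat -> R) (k : nat) : R :=
  (nu k `^ p - nu k.-1 `^ p) `^ p^-1.

Definition nu_norm (p : R) (nu : nat -> R) (k : nat) : R :=
  nu k / (k%:R `^ p^-1).

End Defs.

(* Main.v *)
Require Import Defs.
From HB Require Import structures.
From mathcomp Require Import all_boot all_order all_algebra.
From mathcomp Require Import all_classical all_reals all_analysis.
From mathcomp Require Import ring lra.
Set Implicit Arguments. Unset Strict Implicit.
Import Order.TTheory GRing.Theory Num.Theory numFieldNormedType.Exports.
Local Open Scope classical_set_scope.
Local Open Scope ring_scope.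

Section H.
Variable R : realType.

Lemma xdivle (m n u v : R) : 0 < m -> 0 < n -> (u / m <= v / n) = (u * n <= v * m).
Proof. by move=> m0 n0; rewrite ler_pdivrMr // mulrAC ler_pdivlMr. Qed.

Lemma xle_pow (p x y : R) : 0 < p -> 0 <= x -> 0 <= y -> (x `^ p <= y `^ p) = (x <= y).
Proof.
move=> p0 x0 y0; apply/idP/idP => H; last by apply: ge0_ler_powR => //; exact: ltW.
rewrite leNgt; apply/negP => Hl.
have := gt0_ltr_powR p0 y0 x0 Hl; rewrite ltNge H //.
Qed.

Lemma xpowK (p x : R) : 0 < p -> 0 <= x -> (x `^ p^-1) `^ p = x.
Proof. by move=> p0 x0; rewrite -powRrM mulVf ?gt_eqF // powRr1. Qed.

Lemma xL1 (a : nat -> R) : a 0%N = 0 -> concave_seq a ->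
  forall k, k%:R * (a k.+1 - a k) <= a k.
Proof.
move=> a0 ca; elim => [|k IH]; first by rewrite mul0r a0.
have := ca k.+1 (ltn0Sn _) => /= h.
rewrite -natr1.
have : (k%:R + 1) * (a k.+2 - a k.+1) <= (k%:R + 1) * (a k.+1 - a k).
  by rewrite ler_pM2l ?ltr_wpDl //; lra.
nra.
Qed.

Lemma xL2 (a : nat -> R) : a 0%N = 0 -> concave_seq a ->
  forall k, a k.+1 * k.+2%:R <= a k.+2 * k.+1%:R -> a k.+1 = k.+1%:R * a 1%N.
Proof.
move=> a0 ca; elim => [|k IH H]; first by rewrite mul1r.
have h1 := @xL1 a a0 ca k.+1.
have cc := ca k.+2 (ltn0Sn _); rewrite /= in cc.
rewrite -!natr1 in H h1 IH *.
set K := k%:R + 1 in H h1 IH *.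
have K0 : 0 < K by rewrite /K ltr_wpDl.
have : (K + 1) * (a k.+3 - a k.+2) <= (K + 1) * (a k.+2 - a k.+1).
  by rewrite ler_pM2l ?ltr_wpDl //; lra.
move=> h2.
have e1 : K * (a k.+2 - a k.+1) = a k.+1 by apply/eqP; rewrite eq_le h1 /=; nra.
have e2 := IH ltac:(nra).
have : K * (a k.+2 - (K + 1) * a 1%N) = 0.
  have -> : K * (a k.+2 - (K + 1) * a 1%N) = K * (a k.+2 - a k.+1) - a k.+1 + (a k.+1 - K * a 1%N) * (K + 1).
    ring.
  by rewrite e1 e2; ring.
move/eqP; rewrite mulf_eq0 gt_eqF //= subr_eq0 => /eqP.
by [].
Qed.
Lemma xgen (p x y u v : R) : 0 < p -> 0 <= x -> 0 <= y -> x `^ p = u -> y `^ p = v ->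
  (x <= y) = (u <= v).
Proof. by move=> p0 x0 y0 <- <-; rewrite xle_pow. Qed.
End H.

Opaque powR.

Theorem lemma2p1 (R : realType) (nu : nat -> R) (p : R) :
  modulus_of_variation nu -> 1 <= p ->
  (* (i) *)
  ((nonincr_seq (nu_norm p nu) <-> quasiconcave (fun k => nu k `^ p)) /\
   (quasiconcave (fun k => nu k `^ p) <->
      (forall k : nat, (0 < k)%N -> eps_p p nu k <= nu_norm p nu k))) /\
  (* (ii) *)
  ((nonincr_seq (eps_p p nu) <-> concave_seq (fun k => nu k `^ p)) /\
   (nonincr_seq (eps_p p nu) ->
      (nu_norm p nu @ \oo --> 0) ->
      exists N : nat, forall k : nat, (N <= k)%N ->
        nu_norm p nu k.+1 < nu_norm p nu k)) /\
  (* (iii) *)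
  (exists C : R, forall k : nat, (0 < k)%N ->
     nu k - nu k.-1 <= C * eps_p p nu k * (k%:R `^ (p^-1 - 1))).
Proof.
move=> [nu0 nupos numono nuconc] p1.
have p0 : 0 < p by apply: lt_le_trans p1.
have pn0 : p != 0 by rewrite gt_eqF.
set a := fun k => nu k `^ p.
have a0 : a 0%N = 0 by rewrite /a nu0 powR0.
have nuge0 : forall k, 0 <= nu k by case=> [|k]; [rewrite nu0 | exact/ltW/nupos].
have numono' : forall k, nu k <= nu k.+1 by case=> [|k]; [rewrite nu0 nuge0 | exact: numono].
have amono : forall k, a k <= a k.+1 by move=> k; rewrite /a xle_pow.
have apos : forall k, (0 < k)%N -> 0 < a k by move=> k k0; rewrite /a powR_gt0 // nupos.
have normge0 : forall k, 0 <= nu_norm p nu k.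
  by move=> k; rewrite /nu_norm divr_ge0 ?powR_ge0.
have epsge0 : forall k, 0 <= eps_p p nu k by move=> k; rewrite /eps_p powR_ge0.
have Fnorm : forall k, (0 < k)%N -> nu_norm p nu k `^ p = a k / k%:R.
  move=> k k0; have K0 : 0 < k%:R :> R by rewrite ltr0n.
  rewrite /nu_norm powRM ?invr_ge0 ?powR_ge0 // -powRN -powRrM.
  by rewrite mulNr mulVf // powR_inv1 // ltW.
have Feps : forall k, (0 < k)%N -> eps_p p nu k `^ p = a k - a k.-1.
  case=> // k _; rewrite /eps_p xpowK // subr_ge0; exact: amono.
have aE : forall k, a k = nu k `^ p by [].
clearbody a.
have C1 : forall k, (0 < k)%N ->
   (nu_norm p nu k.+1 <= nu_norm p nu k) = (a k.+1 / k.+1%:R <= a k / k%:R).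
  by move=> k k0; rewrite -(xle_pow p0 (normge0 _) (normge0 _)) !Fnorm.
have C2 : forall k, (0 < k)%N ->
   (eps_p p nu k <= nu_norm p nu k) = (a k - a k.-1 <= a k / k%:R).
  move=> k k0.
  rewrite -(xle_pow p0 (epsge0 k) (normge0 k)).
  rewrite (Fnorm k k0).
  rewrite (Feps k k0).
  by [].
have Qeq : quasiconcave a <-> (forall k, (0 < k)%N -> a k.+1 / k.+1%:R <= a k / k%:R).
  split; first by case.
  by move=> H; split=> //.
split.
  split.
    rewrite Qeq; split=> H k k0; [rewrite -C1 // | rewrite C1 //]; exact: H.
  rewrite Qeq; split=> H k k0.
    rewrite C2 //; case: k k0 => // -[|k] _ /=.
      by rewrite a0 subr0 divr1.
    have := H k.+1 (ltn0Sn _); rewrite xdivle ?ltr0n // ler_pdivlMr ?ltr0n // -[k.+2%:R]natr1.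
    set K := k.+1%:R; move=> h; clear -h; lra.
  have := H k.+1 (ltn0Sn _); rewrite C2 //= xdivle ?ltr0n // ler_pdivlMr ?ltr0n // -[k.+1%:R]natr1.
  set K := k%:R; move=> h; clear -h; lra.
have C3 : forall k, (0 < k)%N ->
   (eps_p p nu k.+1 <= eps_p p nu k) = (a k.+1 - a k <= a k - a k.-1).
  move=> k k0.
  exact: (xgen p0 (epsge0 k.+1) (epsge0 k) (Feps k.+1 (ltn0Sn k)) (Feps k k0)).
have ceq : nonincr_seq (eps_p p nu) <-> concave_seq a.
  split=> H k k0.
    have := H k k0; rewrite C3 //.
    by case: k k0 => // k _ /=; move=> h; clear -h; lra.
  rewrite C3 //.
  by have := H k k0; case: k k0 => // k _ /=; move=> h; clear -h; lra.
split.
  split; first exact: ceq.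
  move=> /ceq ca cv.
  have nu1 : 0 < nu 1%N by apply: nupos.
  have := cvgr_lt _ cv _ nu1 => -[N _ HN].
  exists (maxn N 1) => k Hk.
  have kN : (N <= k)%N by apply: leq_trans Hk; rewrite leq_maxl.
  have k0 : (0 < k)%N by apply: leq_trans Hk; rewrite leq_maxr.
  have Hlt : nu_norm p nu k < nu 1%N by apply: HN.
  rewrite ltNge; apply/negP => Hle.
  move: Hle; rewrite -(xle_pow p0) // !Fnorm // xdivle ?ltr0n //.
  case: k k0 kN Hk Hlt => // k _ _ _ Hlt Hle.
  have e := xL2 a0 ca Hle.
  have : nu_norm p nu k.+1 `^ p = nu 1%N `^ p.
    by rewrite Fnorm // e mulrAC mulfV ?pnatr_eq0 // mul1r aE.
  move/(powR_injective p0); rewrite !nnegrE => /(_ (normge0 _) (nuge0 _)) E.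
  by move: Hlt; rewrite E ltxx.
exists 1 => k k0; rewrite mul1r.
case: k k0 => // k _ /=.
set d := nu k.+1 - nu k.
have dE : d = nu k.+1 - nu k by [].
have d0 : 0 <= d by rewrite subr_ge0.
have K0 : 0 < k.+1%:R :> R by rewrite ltr0n.
have hk : k.+1%:R * d <= nu k.+1.
  have := @xL1 R nu nu0 nuconc k; rewrite -natr1 => h; rewrite /d in h *; clear -h; lra.
clearbody d.
have p10 : 0 <= p - 1 by rewrite subr_ge0.
have key : k.+1%:R `^ (p - 1) * d `^ p <= a k.+1 - a k.
  rewrite !aE -(mulr_powRB1 (nuge0 k.+1)) // -(mulr_powRB1 (nuge0 k)) //.
  have h1 : nu k `^ (p - 1) <= nu k.+1 `^ (p - 1).
    by apply: ge0_ler_powR => //; rewrite nnegrE.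
  have h2 : (k.+1%:R * d) `^ (p - 1) <= nu k.+1 `^ (p - 1).
    by apply: ge0_ler_powR => //; rewrite nnegrE ?mulr_ge0 // ltW.
  have h2' : k.+1%:R `^ (p - 1) * d `^ (p - 1) <= nu k.+1 `^ (p - 1).
    by rewrite -powRM // ltW.
  rewrite -(mulr_powRB1 d0) //.
  have g4 := nuge0 k.
  have f1 : nu k.+1 `^ (p - 1) * d - (k.+1%:R `^ (p - 1) * d `^ (p - 1)) * d >= 0.
    by rewrite -mulrBl mulr_ge0 // subr_ge0.
  have f2 : nu k * (nu k.+1 `^ (p - 1) - nu k `^ (p - 1)) >= 0.
    by rewrite mulr_ge0 // subr_ge0.
  have f3 : nu k.+1 `^ (p - 1) * d = nu k.+1 * nu k.+1 `^ (p - 1) - nu k * nu k.+1 `^ (p - 1).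
    by rewrite dE mulrBr mulrC [X in _ - X]mulrC.
  clear -f1 f2 f3; lra.
rewrite -(xle_pow p0) ?mulr_ge0 ?powR_ge0 //.
rewrite powRM ?powR_ge0 // (Feps k.+1 (ltn0Sn k)) /= -powRrM.
have -> : (p^-1 - 1) * p = - (p - 1) by rewrite mulrBl mulVf // mul1r opprB.
rewrite powRN.
have Kp0 : 0 < k.+1%:R `^ (p - 1) by rewrite powR_gt0.
by rewrite ler_pdivlMr // mulrC.
Qed.
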